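(* Let $e>1$ be odd, $t\ge0$, $\mathbf c=(t+(1-e)/2,0)$, and let $\mu$ be a bipartition. Let $0\le j_1\ne j_2\le e-1$ and suppose $\tilde f_{j_i}|\mu,\mathbf c\rangle\ne0$ for $i=1,2$; write $\tilde f_{j_i}|\mu,\mathbf c\rangle=|\nu_i,\mathbf c\rangle$. Then the $e$-cores of $\Phi_t(\nu_1)$ and $\Phi_t(\nu_2)$ are distinct.
   Context: Crystal graph $\mathcal G_{\mathbf c,e}$: vertices $|\nu,\mathbf c\rangle$, $\nu$ a bipartition; nodes $(a,b,j)$ of $\nu^j$ have content $b-a+c_j$ and residue content mod $e$; for residue $i$ order the addable and removable $i$-nodes by increasing content (ties: larger $j$ first), write them as a word in $A$ (addable)/$R$ (removable), cancel consecutive $RA$ recursively to obtain $A^\alpha R^\beta$; if $\alpha>0$ the good addable $i$-node is that of the rightmost $A$. The Kashiwara operator $\tilde f_i$ maps $|\nu,\mathbf c\rangle$ to $|\nu\cup\{\gamma\},\mathbf c\rangle$ where $\gamma$ is the good addable $i$-node of $\nu$, and to $0$ if there is none. $\Delta_t=(t,\dots,1)$. For a partition $\lambda$ with $\beta$-set $B$ of odd size, $\lambda^{(2)}=(\pi\{x/2:x\in B\text{ even}\},\pi\{(x-1)/2:x\in B\text{ odd}\})$, $\pi(X)$ the partition with $\beta$-set $X$; if $\lambda$ has $2$-core $\Delta_t$, $\bar\lambda^{(2)}$ equals $\lambda^{(2)}$ for $t$ even and the swapped pair for $t$ odd; $\Phi_t(\nu)$ is the unique partition with $2$-core $\Delta_t$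 and $\bar\lambda^{(2)}=\nu$. *)

(* Defs.v *)
From mathcomp Require Import all_boot all_order all_algebra.
Set Implicit Arguments. Unset Strict Implicit. Unset Printing Implicit Defensive.
Import Order.TTheory GRing.Theory Num.Theory.

(* A partition is a nonincreasing list of positive parts; rows are 1-indexed:
   the a-th part (a >= 1) is  nth 0 la a.-1 . *)
Definition is_partition (la : seq nat) : bool :=
  sorted geq la && all (fun x => 0 < x) la.

Definition bipartition := (seq nat * seq nat)%type.
Definition is_bipartition (nu : bipartition) : bool :=
  is_partition nu.1 && is_partition nu.2.

Definition part (la : seq nat) (a : nat) : nat := nth 0 la a.-1.

(* a node (a, b, j): row a, column b (both 1-indexed), component j in {1,2} *)
Definition node := (nat * nat * nat)%type.
Definition nrow (g : node) : nat := g.1.1.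
Definition ncol (g : node) : nat := g.1.2.
Definition ncomp (g : node) : nat := g.2.

Definition charge_of (c : int * int) (j : nat) : int := if j == 1 then c.1 else c.2.

Definition content (c : int * int) (g : node) : int :=
  (ncol g)%:Z - (nrow g)%:Z + charge_of c (ncomp g).

Definition residue (e : nat) (c : int * int) (g : node) : int :=
  (content c g %% (e%:Z))%Z.

Definition addable_nodes (la : seq nat) (j : nat) : seq node :=
  [seq (a, (part la a).+1, j) |
     a <- iota 1 (size la).+1 & (a == 1) || (part la a < part la a.-1)].

Definition removable_nodes (la : seq nat) (j : nat) : seq node :=
  [seq (a, part la a, j) | a <- iota 1 (size la) & part la a.+1 < part la a].

(* letters: (true, g) = A (addable g), (false, g) = R (removable g) *)
Definition letter := (bool * node)%type.

Definition letter_le (c : int * int) (x y : letter) : bool :=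
  (content c x.2 < content c y.2)%R
  || ((content c x.2 == content c y.2) && (ncomp y.2 <= ncomp x.2)).

Definition i_word (e : nat) (c : int * int) (i : nat) (mu : bipartition)
  : seq letter :=
  let As := addable_nodes mu.1 1 ++ addable_nodes mu.2 2 in
  let Rs := removable_nodes mu.1 1 ++ removable_nodes mu.2 2 in
  let w := [seq (true, g) | g <- As] ++ [seq (false, g) | g <- Rs] in
  sort (letter_le c) [seq l <- w | residue e c l.2 == Posz i].

Fixpoint cancel_RA (w : seq letter) : seq letter :=
  match w with
  | (false, g) :: (true, h) :: w' => w'
  | l :: w' => l :: cancel_RA w'
  | [::] => [::]
  end.

(* recursive cancellation of all consecutive RA (at most size w steps) *)
Definition reduced_word (w : seq letter) : seq letter :=
  iter (size w) cancel_RA w.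

Definition good_addable (e : nat) (c : int * int) (i : nat) (mu : bipartition)
  : option node :=
  ohead (rev [seq l.2 | l <- reduced_word (i_word e c i mu) & l.1]).

Definition add_node (mu : bipartition) (g : node) : bipartition :=
  if ncomp g == 1 then (incr_nth mu.1 (nrow g).-1, mu.2)
  else (mu.1, incr_nth mu.2 (nrow g).-1).

(* f_i |mu, c> = |mu u {gamma}, c>, or 0 (represented by None) *)
Definition f_tilde (e : nat) (c : int * int) (i : nat) (mu : bipartition)
  : option bipartition :=
  omap (add_node mu) (good_addable e c i mu).

(* beta-set of la with r beads (r >= size la) *)
Definition beta_set (la : seq nat) (r : nat) : seq nat :=
  [seq nth 0 la a + r - a.+1 | a <- iota 0 r].

Definition part_of_beta (X : seq nat) : seq nat :=
  let s := sort geq (undup X) in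
  let k := size s in
  [seq x <- [seq nth 0 s i - (k - i.+1) | i <- iota 0 k] | 0 < x].

(* lambda^(2), computed from a beta-set of odd size *)
Definition quot2 (la : seq nat) : seq nat * seq nat :=
  let r := if odd (size la) then size la else (size la).+1 in
  let B := beta_set la r in
  (part_of_beta [seq x./2 | x <- B & ~~ odd x],
   part_of_beta [seq x./2 | x <- B & odd x]).

Definition barquot2 (t : nat) (la : seq nat) : seq nat * seq nat :=
  if odd t then ((quot2 la).2, (quot2 la).1) else quot2 la.

(* e-core, via the e-abacus: slide all beads of each runner up *)
Definition core (e : nat) (la : seq nat) : seq nat :=
  let B := beta_set la (size la) in
  part_of_beta
    (flatten [seq [seq r + e * k | k <- iota 0 (count (fun x => x %% e == r) B)]
             | r <- iota 0 e]).

Definition staircase (t : nat) : seq nat := rev (iota 1 t).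

Definition is_Phi (t : nat) (nu : bipartition) (la : seq nat) : Prop :=
  [/\ is_partition la, core 2 la = staircase t & barquot2 t la = nu].

(* Main.v *)
Require Import Defs.
From mathcomp Require Import all_boot all_order all_algebra zify.
Import Order.TTheory GRing.Theory Num.Theory.
Set Implicit Arguments. Unset Strict Implicit. Unset Printing Implicit Defensive.

Lemma perm_countmem (s1 s2 : seq nat) :
  (forall x, count_mem x s1 = count_mem x s2) -> perm_eq s1 s2.
Proof. by move=> H; rewrite /perm_eq; apply/allP => x _ /=; rewrite H. Qed.

Definition shift (X : seq nat) : seq nat := map succn X ++ [:: 0].

Lemma beta_set_S la r : size la <= r ->
  beta_set la r.+1 = shift (beta_set la r).
Proof.
move=> hr; rewrite /beta_set /shift -addn1 iotaD map_cat /= add0n.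
congr (_ ++ _); last by rewrite nth_default // addn1 subnn.
rewrite -map_comp; apply/eq_in_map => a; rewrite mem_iota /= => ha; lia.
Qed.

Lemma beta_set_iter la r d : size la <= r ->
  beta_set la (r + d) = iter d shift (beta_set la r).
Proof.
move=> hr; elim: d => [|d IH]; first by rewrite addn0.
by rewrite addnS beta_set_S ?IH //; lia.
Qed.

Lemma size_beta la r : size (beta_set la r) = r.
Proof. by rewrite size_map size_iota. Qed.

Lemma beta_set_cons x la N : beta_set (x :: la) N.+1 = (x + N) :: beta_set la N.
Proof.
rewrite /beta_set /=.
have -> : iota 1 N = map (addn 1) (iota 0 N) by rewrite -(iotaDl 1 0).
rewrite -map_comp; congr (_ :: _); first lia.
apply/eq_map => a /=; rewrite add0n; lia.
Qed.

Lemma geq_trans_nat : transitive geq.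
Proof. by move=> a b c h1 h2; apply: leq_trans h2 h1. Qed.

Lemma filter_pos_nth (q : seq nat) : sorted geq q ->
  forall a, nth 0 [seq x <- q | 0 < x] a = nth 0 q a.
Proof.
elim: q => [|x q IH] //= hs a.
have hq : sorted geq q := path_sorted hs.
case: (posnP x) => [x0|xp].
  have hall : all (geq x) q := order_path_min geq_trans_nat hs.
  have -> : [seq y <- q | 0 < y] = [::].
    apply/eqP; rewrite -(negbK (_ == _)) -has_filter; apply/hasPn => y hy.
    by move/allP: hall => /(_ y hy); rewrite x0 /= leqn0 => /eqP ->.
  rewrite nth_nil; case: a => [|a] //=.
  case: (ltnP a (size q)) => ha; last by rewrite nth_default.
  by move/allP: hall => /(_ (nth 0 q a) (mem_nth 0 ha)); rewrite x0 /= leqn0 => /eqP ->.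
by case: a => [|a] //=; rewrite IH.
Qed.

Lemma dec_bound (s : seq nat) : sorted geq s -> uniq s ->
  forall a, a < size s -> size s - a.+1 <= nth 0 s a.
Proof.
elim: s => [|x s IH] //= hs /andP [hx hu] a ha.
have hq : sorted geq s := path_sorted hs.
case: a ha => [|a] ha /=; last by apply: IH => //.
case: s hs hx hu IH hq {ha} => [|y s] //= /andP [hxy _] hx hu IH hq.
have := IH hq hu 0 isT; rewrite /=.
have : y != x by apply: contraNneq hx => ->; rewrite inE eqxx.
move: hxy; lia.
Qed.

Lemma pob_beta (X : seq nat) : uniq X ->
  beta_set (part_of_beta X) (size X) = sort geq X.
Proof.
move=> hu; rewrite /part_of_beta (undup_id hu).
set s := sort geq X.
have hss : sorted geq s by apply: sort_sorted; move=> a b; apply: leq_total.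
have hsu : uniq s by rewrite sort_uniq.
have hks : size s = size X by rewrite size_sort.
rewrite hks.
set g := fun i => nth 0 s i - (size X - i.+1).
have hsg : sorted geq (mkseq g (size X)).
  apply/(sortedP 0) => i; rewrite size_mkseq => hi.
  rewrite !nth_mkseq //; last by lia.
  rewrite /g.
  have h1 : nth 0 s i.+1 <= nth 0 s i by move/(sortedP 0): hss => /(_ i); rewrite hks; apply.
  have h2 : nth 0 s i != nth 0 s i.+1 by rewrite nth_uniq ?hks //; lia.
  have h3 := dec_bound hss hsu (a:=i.+1); rewrite hks in h3.
  move: (h3 hi) h1 h2; rewrite /geq /=; lia.
rewrite /beta_set; apply: (@eq_from_nth _ 0); first by rewrite size_map size_iota hks.
move=> i; rewrite size_map size_iota => hi.
rewrite (nth_map 0) ?size_iota // nth_iota // add0n.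
rewrite (filter_pos_nth hsg) nth_mkseq // /g.
have := dec_bound hss hsu (a:=i); rewrite hks => /(_ hi); lia.
Qed.

Lemma size_pob (X : seq nat) : size (part_of_beta X) <= size X.
Proof.
rewrite /part_of_beta size_filter (leq_trans (count_size _ _)) //.
by rewrite size_map size_iota size_sort size_undup.
Qed.

Definition cntr (e : nat) (B : seq nat) (r : nat) :=
  count (fun x => x %% e == r) B.

Definition Ccore (e : nat) (B : seq nat) : seq nat :=
  flatten [seq [seq r + e * k | k <- iota 0 (count (fun x => x %% e == r) B)]
          | r <- iota 0 e].

Lemma core_C e la : core e la = part_of_beta (Ccore e (beta_set la (size la))).
Proof. by []. Qed.

Lemma modC e r k : r < e -> (r + e * k) %% e = r.
Proof. by move=> h; rewrite addnC mulnC modnMDl modn_small. Qed.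

Lemma uniq_C_gen e B (l : seq nat) : 0 < e -> uniq l -> all (fun r => r < e) l ->
  uniq (flatten [seq [seq r + e * k | k <- iota 0 (count (fun x => x %% e == r) B)]
          | r <- l]).
Proof.
move=> he; elim: l => [|r l IH] //= /andP [hr hu] /andP [hre hl].
rewrite cat_uniq IH // andbT; apply/andP; split.
  rewrite map_inj_uniq ?iota_uniq //.
  by move=> a b /eqP; rewrite eqn_add2l eqn_pmul2l // => /eqP.
apply/hasPn => y /flatten_mapP [r' hr' /mapP [k' _ ->]]; apply/negP => /mapP [k _ hk].
move: hk => /(congr1 (modn^~ e)); rewrite !modC //; last by move/allP: hl; apply.
by move=> h; move: hr; rewrite -h hr'.
Qed.

Lemma uniq_C e B : 0 < e -> uniq (Ccore e B).
Proof.
move=> he; apply: uniq_C_gen => //; first exact: iota_uniq.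
by apply/allP => r; rewrite mem_iota.
Qed.

Lemma sumn_ind (l : seq nat) (c : nat -> nat) r : uniq l ->
  sumn [seq (if r' == r then c r' else 0) | r' <- l] = (r \in l) * c r.
Proof.
elim: l => [|x l IH] //= /andP [hx hu]; rewrite IH // inE.
case: (eqVneq x r) => [<-|hne] /=; first by rewrite (negbTE hx) mul0n addn0 mul1n.
by rewrite add0n.
Qed.

Lemma count_C e B r : 0 < e -> r < e ->
  count (fun x => x %% e == r) (Ccore e B) = count (fun x => x %% e == r) B.
Proof.
move=> he hr; rewrite /Ccore count_flatten -map_comp.
rewrite (@eq_in_map _ _ _ (fun r' => if r' == r then count (fun x => x %% e == r') B else 0) (iota 0 e)).1.
  by rewrite sumn_ind ?iota_uniq // mem_iota hr mul1n.
move=> r'; rewrite mem_iota /= => hr'; rewrite count_map.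
rewrite (eq_count (a2 := fun _ => r' == r)); last by move=> k /=; rewrite modC.
by case: eqP => _; [rewrite count_predT size_iota | rewrite count_pred0].
Qed.

Definition Me (e : nat) (X : seq nat) := map (modn^~ e) X.


Lemma Me_C e B : 0 < e -> perm_eq (Me e (Ccore e B)) (Me e B).
Proof.
move=> he; apply: perm_countmem => x; rewrite /Me !count_map.
case: (ltnP x e) => hx; first exact: count_C.
rewrite !(eq_count (a2 := pred0)) ?count_pred0 //.
  by move=> y /=; apply/negbTE; rewrite neq_ltn (leq_trans (ltn_pmod _ he)).
by move=> y /=; apply/negbTE; rewrite neq_ltn (leq_trans (ltn_pmod _ he)).
Qed.

Lemma Me_shift e X Y : perm_eq (Me e X) (Me e Y) ->
  perm_eq (Me e (shift X)) (Me e (shift Y)).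
Proof.
have E : forall Z, Me e (shift Z) = map (fun m => m.+1 %% e) (Me e Z) ++ [:: 0 %% e].
  move=> Z; rewrite /Me /shift map_cat -!map_comp; congr (_ ++ _).
  by apply: eq_map => m /=; rewrite -[m.+1]addn1 -[(m %% e).+1]addn1 modnDml.
by move=> h; rewrite !E perm_cat2r perm_map.
Qed.

Lemma Me_iter e X Y d : perm_eq (Me e X) (Me e Y) ->
  perm_eq (Me e (iter d shift X)) (Me e (iter d shift Y)).
Proof. by elim: d => [|d IH] //= h; apply: Me_shift; apply: IH. Qed.

Lemma core_Me e la N : 0 < e -> size la <= N ->
  perm_eq (Me e (beta_set la N)) (Me e (beta_set (core e la) N)).
Proof.
move=> he hN; rewrite core_C.
set B := beta_set la (size la); set C := Ccore e B.
have hMC := Me_C B he; rewrite -/C in hMC.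
have hsC : size C = size la by rewrite -(size_map (modn^~ e)) (perm_size hMC) size_map size_beta.
have hpb := pob_beta (uniq_C B he); rewrite -/C hsC in hpb.
have hsp : size (part_of_beta C) <= size la by rewrite -hsC size_pob.
have -> : N = size la + (N - size la) by rewrite subnKC.
rewrite (beta_set_iter (N - size la) (leqnn _)) (beta_set_iter (N - size la) hsp).
apply: Me_iter; rewrite hpb.
by rewrite perm_sym (perm_trans _ hMC) // perm_map // perm_sort.
Qed.

Lemma staircaseS t : staircase t.+1 = t.+1 :: staircase t.
Proof.
rewrite /staircase.
have -> : iota 1 t.+1 = iota 1 t ++ [:: t.+1].
  by rewrite -[t.+1]addn1 iotaD /= add1n addn1.
by rewrite rev_cat.
Qed.

Lemma beta_nilS N : beta_set [::] N.+1 = N :: beta_set [::] N.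
Proof.
have -> : beta_set [::] N.+1 = beta_set [:: 0] N.+1.
  by apply: eq_map => a; case: a => [|[|a]].
by rewrite beta_set_cons.
Qed.

Lemma count_beta_nil N :
  count (fun x => ~~ odd x) (beta_set [::] N) = count odd (beta_set [::] N) + odd N.
Proof.
elim: N => [|N IH] //; rewrite beta_nilS /= IH.
by case: (odd N) => /=; lia.
Qed.

Lemma count_stair t N : t <= N ->
  count (fun x => ~~ odd x) (beta_set (staircase t) N) + (if odd (N + t) then 0 else t)
  = count odd (beta_set (staircase t) N) + (if odd (N + t) then t.+1 else 0).
Proof.
elim: t N => [|t IH] N hN.
  by rewrite addn0 /staircase /= count_beta_nil; case: (odd N) => /=; rewrite ?addn0.
case: N hN => [|M] // hM.
rewrite staircaseS beta_set_cons /=.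
have := IH M hM.
rewrite addnS /= negbK.
have -> : odd (t + M) = odd (M + t) by rewrite addnC.
case: (odd (M + t)) => /=; lia.
Qed.

Definition ev (X : seq nat) := [seq x./2 | x <- X & ~~ odd x].
Definition od (X : seq nat) := [seq x./2 | x <- X & odd x].

Lemma shift2 X : shift (shift X) = map (fun x => x.+2) X ++ [:: 1; 0].
Proof. by rewrite /shift map_cat -map_comp /= -catA. Qed.

Lemma ev_shift2 X : ev (shift (shift X)) = shift (ev X).
Proof.
rewrite shift2 /ev /shift filter_cat map_cat /= filter_map -!map_comp.
congr (_ ++ _); rewrite (@eq_filter _ _ (fun x => ~~ odd x)); last by move=> x /=; rewrite negbK.
by apply: eq_map => x /=.
Qed.

Lemma od_shift2 X : od (shift (shift X)) = shift (od X).
Proof.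
rewrite shift2 /od /shift filter_cat map_cat /= filter_map -!map_comp.
congr (_ ++ _); rewrite (@eq_filter _ _ odd); last by move=> x /=; rewrite negbK.
by apply: eq_map => x /=.
Qed.

Lemma ev_iter d X : ev (iter d.*2 shift X) = iter d shift (ev X).
Proof. by elim: d => [|d IH] //; rewrite doubleS !iterS ev_shift2 IH. Qed.

Lemma od_iter d X : od (iter d.*2 shift X) = iter d shift (od X).
Proof. by elim: d => [|d IH] //; rewrite doubleS !iterS od_shift2 IH. Qed.

Lemma size_iter_shift d X : size (iter d shift X) = size X + d.
Proof. by elim: d => [|d IH] /=; rewrite ?addn0 // /shift size_cat size_map IH addn1 addnS. Qed.

Lemma perm_shift X Y : perm_eq X Y -> perm_eq (shift X) (shift Y).
Proof. by move=> h; rewrite /shift perm_cat2r perm_map. Qed.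

Lemma perm_iter_shift d X Y : perm_eq X Y -> perm_eq (iter d shift X) (iter d shift Y).
Proof. by elim: d => [|d IH] //= h; apply: perm_shift; apply: IH. Qed.

Lemma PB d X : uniq X -> perm_eq (iter d shift X) (beta_set (part_of_beta X) (size X + d)).
Proof.
move=> hu; rewrite beta_set_iter ?size_pob //; apply: perm_iter_shift.
by rewrite pob_beta // perm_sym perm_sort.
Qed.

Lemma recon_perm X :
  perm_eq X (map double (ev X) ++ map (fun y => y.*2.+1) (od X)).
Proof.
rewrite -(perm_filterC (fun x => ~~ odd x)).
rewrite /ev /od -!map_comp; apply: perm_cat.
  rewrite (@eq_in_map _ _ _ id _).1 ?map_id //.
  by move=> x; rewrite mem_filter => /andP [h _] /=; rewrite -[RHS](odd_double_half x) (negbTE h).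
rewrite (@eq_in_map _ _ _ id _).1 ?map_id; last first.
  by move=> x; rewrite mem_filter => /andP [h _] /=; rewrite -[RHS](odd_double_half x) h.
by rewrite (@eq_filter _ (predC (fun x => ~~ odd x)) odd) // => x /=; rewrite negbK.
Qed.

Lemma nth_geq la a b : sorted geq la -> a <= b -> nth 0 la b <= nth 0 la a.
Proof.
move=> hs hab; case: (ltnP b (size la)) => hb; last by rewrite nth_default.
have ha : a < size la by apply: leq_ltn_trans hb.
exact: (sorted_leq_nth geq_trans_nat (fun x => leqnn x) 0 hs).
Qed.

Lemma beta_uniq la r : sorted geq la -> uniq (beta_set la r).
Proof.
move=> hs; rewrite /beta_set map_inj_in_uniq ?iota_uniq //.
move=> a b; rewrite !mem_iota /= => ha hb.
wlog hab : a b ha hb / a <= b.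
  move=> H; case: (leqP a b) => h; first exact: H.
  by move=> e; apply/esym; apply: H => //; apply: ltnW.
have := nth_geq hs hab; lia.
Qed.

Lemma ev_uniq X : uniq X -> uniq (ev X).
Proof.
move=> hu; rewrite /ev map_inj_in_uniq ?filter_uniq //.
move=> x y; rewrite !mem_filter => /andP [hx _] /andP [hy _] h.
by rewrite -(odd_double_half x) -(odd_double_half y) h (negbTE hx) (negbTE hy).
Qed.

Lemma od_uniq X : uniq X -> uniq (od X).
Proof.
move=> hu; rewrite /od map_inj_in_uniq ?filter_uniq //.
move=> x y; rewrite !mem_filter => /andP [hx _] /andP [hy _] h.
by rewrite -(odd_double_half x) -(odd_double_half y) h hx hy.
Qed.

Lemma recon la N : sorted geq la -> odd N ->
  (if odd (size la) then size la else (size la).+1) <= N ->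
  [/\ perm_eq (beta_set la N)
        (map double (beta_set (quot2 la).1 (count (fun x => ~~ odd x) (beta_set la N)))
         ++ map (fun y => y.*2.+1) (beta_set (quot2 la).2 (count odd (beta_set la N)))),
      size (quot2 la).1 <= count (fun x => ~~ odd x) (beta_set la N) &
      size (quot2 la).2 <= count odd (beta_set la N)].
Proof.
move=> hs hN.
set r := (if odd (size la) then size la else (size la).+1) => hrN.
have hr : size la <= r by rewrite /r; case: ifP.
have hor : odd r by rewrite /r; case: ifP => //= ->.
set Br := beta_set la r.
have hq : quot2 la = (part_of_beta (ev Br), part_of_beta (od Br)) by [].
set d := (N - r)./2.
have hNd : N = r + d.*2.
  have hev : odd (N - r) = false by apply/negbTE; rewrite oddB // hN hor.
  have := odd_double_half (N - r); rewrite hev add0n => h.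
  by rewrite /d h subnKC.
have hB : beta_set la N = iter d.*2 shift Br by rewrite hNd beta_set_iter.
have he : ev (beta_set la N) = iter d shift (ev Br) by rewrite hB ev_iter.
have ho : od (beta_set la N) = iter d shift (od Br) by rewrite hB od_iter.
have hc0 : count (fun x => ~~ odd x) (beta_set la N) = size (ev Br) + d.
  by rewrite -size_iter_shift -he /ev size_map size_filter.
have hc1 : count odd (beta_set la N) = size (od Br) + d.
  by rewrite -size_iter_shift -ho /od size_map size_filter.
have hu : uniq Br by apply: beta_uniq.
rewrite hq /= hc0 hc1; split.
- apply: (perm_trans (recon_perm _)); rewrite he ho.
  by apply: perm_cat; apply: perm_map; apply: PB; [exact: ev_uniq|exact: od_uniq].
- by apply: leq_trans (size_pob _) (leq_addr _ _).
- by apply: leq_trans (size_pob _) (leq_addr _ _).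
Qed.

Lemma count_upd (P : pred nat) (f g : nat -> nat) (l : seq nat) k :
  uniq l -> k \in l -> (forall a, a != k -> g a = f a) ->
  count P (map g l) + P (f k) = count P (map f l) + P (g k).
Proof.
move=> hu hk hfg; elim: l hu hk => [|x l IH] //= /andP [hx hu].
rewrite inE; case: (eqVneq k x) => [E|hne] /= hk.
  subst x.
  have -> : count P (map g l) = count P (map f l).
    congr (count P _); apply/eq_in_map => y hy; apply: hfg.
    by apply/eqP => E; move: hx; rewrite -E hy.
  lia.
by rewrite hfg 1?eq_sym //; move: (IH hu hk); lia.
Qed.

Lemma slot_count (h : nat -> nat) (hh : forall y, h y.+1 = h y + 2)
  (p : seq nat) k n (P : pred nat) : k < n ->
  count P (map h (beta_set (incr_nth p k) n)) + P (h (nth 0 p k + n - k.+1))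
  = count P (map h (beta_set p n)) + P (h (nth 0 p k + n - k.+1) + 2).
Proof.
move=> hk; rewrite /beta_set -!map_comp.
have := @count_upd P (h \o fun a => nth 0 p a + n - a.+1)
  (h \o fun a => nth 0 (incr_nth p k) a + n - a.+1) (iota 0 n) k (iota_uniq _ _).
rewrite mem_iota /= hk => /(_ isT); rewrite nth_incr_nth eqxx add1n.
have -> : (nth 0 p k).+1 + n - k.+1 = (nth 0 p k + n - k.+1).+1 by lia.
rewrite hh => -> //.
by move=> a hne; rewrite nth_incr_nth eq_sym (negbTE hne).
Qed.

Lemma mem_cancel (w : seq letter) x : x \in cancel_RA w -> x \in w.
Proof.
elim: w => [|[b g] w IH] //=.
case: b.
  by rewrite !inE => /orP [->|/IH ->] //; rewrite orbT.
case: w IH => [|[b' h] w'] IH //.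
case: b' IH => IH.
  by rewrite !inE => ->; rewrite !orbT.
by rewrite !inE => /orP [->|/IH]; rewrite ?inE => // ->; rewrite !orbT.
Qed.

Lemma mem_reduced (w : seq letter) x : x \in reduced_word w -> x \in w.
Proof.
rewrite /reduced_word; elim: (size w) => [|n IH] //= /mem_cancel; exact: IH.
Qed.

Lemma good_spec e c i mu nu : f_tilde e c i mu = Some nu ->
  exists k j, [/\ j = 1 \/ j = 2,
    nu = add_node mu (k.+1, (nth 0 (if j == 1 then mu.1 else mu.2) k).+1, j) &
    residue e c (k.+1, (nth 0 (if j == 1 then mu.1 else mu.2) k).+1, j) = Posz i].
Proof.
rewrite /f_tilde /good_addable.
set s := [seq l.2 | l <- _ & l.1].
case hs : (ohead (rev s)) => [g|] //= [<-].
have hg : g \in s.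
  move: hs; rewrite -mem_rev; case: (rev s) => [|y s'] //= [->]; exact: mem_head.
move: hg => /mapP [[b g'] /=]; rewrite mem_filter /= => /andP [hb hl] ->.
case: b hb hl => // _ /mem_reduced; rewrite /i_word mem_sort mem_filter => /andP [hres hw].
move: hw; rewrite mem_cat => /orP [] /mapP [g'' hg'' [E]]; last by [].
subst g''; move: hg''; rewrite mem_cat /addable_nodes => /orP [] /mapP [a].
  rewrite mem_filter mem_iota => /andP [_ /andP [ha _]] E; subst g'.
  exists a.-1, 1; split; [by left| |]; rewrite /part prednK //.
  exact/eqP.
rewrite mem_filter mem_iota => /andP [_ /andP [ha _]] E; subst g'.
exists a.-1, 2; split; [by right| |]; rewrite /part prednK //.
exact/eqP.
Qed.

Definition n0 t N := count (fun x => ~~ odd x) (beta_set (staircase t) N).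
Definition n1 t N := count odd (beta_set (staircase t) N).
Definition W0 t (mu : bipartition) N :=
  map double (beta_set (if odd t then mu.2 else mu.1) (n0 t N))
  ++ map (fun y => y.*2.+1) (beta_set (if odd t then mu.1 else mu.2) (n1 t N)).
Definition Kc t N : int :=
  if odd t then (2 * (n0 t N)%:Z - 2)%R else (2 * (n1 t N)%:Z - 1)%R.

Lemma count_par X Y : perm_eq (Me 2 X) (Me 2 Y) ->
  count (fun x => ~~ odd x) X = count (fun x => ~~ odd x) Y /\
  count odd X = count odd Y.
Proof.
move/permP=> h; split.
  have := h (pred1 0); rewrite /Me !count_map.
  have E : forall Z, count (preim (modn^~ 2) (pred1 0)) Z = count (fun x => ~~ odd x) Z.
    by move=> Z; apply: eq_count => x /=; rewrite modn2; case: (odd x).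
  by rewrite !E.
have := h (pred1 1); rewrite /Me !count_map.
have E : forall Z, count (preim (modn^~ 2) (pred1 1)) Z = count odd Z.
  by move=> Z; apply: eq_count => x /=; rewrite modn2; case: (odd x).
by rewrite !E.
Qed.

Lemma hdiv e : odd e -> e = ((e - 1) %/ 2).*2.+1.
Proof.
move=> he; have := odd_double_half e; rewrite he /= => E.
have E1 : e - 1 = e./2.*2 by lia.
rewrite E1 divn2 doubleK; lia.
Qed.

Lemma key e t mu j nu la N :
  1 < e -> odd e ->
  f_tilde e ((t%:Z - ((e - 1) %/ 2)%:Z)%R, 0%R) j mu = Some nu ->
  is_Phi t nu la -> odd N ->
  (if odd (size la) then size la else (size la).+1) <= N -> t <= N ->
  exists x (m : int),
   (forall r, count (fun y => y %% e == r) (beta_set la N) + (x %% e == r)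
      = count (fun y => y %% e == r) (W0 t mu N) + ((x + 2) %% e == r))
   /\ (x%:Z = 2 * j%:Z + Kc t N + e%:Z * m)%R.
Proof.
move=> he1 heo hf [hpart hcore hbar] hN hr htN.
have hs : sorted geq la by case/andP: hpart.
have [hperm hs0 hs1] := recon hs hN hr.
have hsz : size la <= N by move: hr; case: ifP => ?; lia.
have hM := core_Me (isT : 0 < 2) hsz; rewrite hcore in hM.
have [hc0 hc1] := count_par hM.
rewrite hc0 hc1 -/(n0 t N) -/(n1 t N) in hperm hs0 hs1.
have hst := count_stair htN; rewrite -/(n0 t N) -/(n1 t N) oddD hN /= in hst.
have [k [jj [hjj hnu hres]]] := good_spec hf.
have hq := divz_eq (content ((t%:Z - ((e - 1) %/ 2)%:Z)%R, 0%R)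
   (k.+1, (nth 0 (if jj == 1 then mu.1 else mu.2) k).+1, jj)) e.
rewrite /residue in hres; rewrite hres in hq.
have hbar' : quot2 la = (if odd t then (nu.2, nu.1) else nu).
  by move: hbar; rewrite /barquot2; case: (odd t) => <- //; case: (quot2 la).
have he := hdiv heo.
have hh0 : forall y, double y.+1 = double y + 2 by move=> y; rewrite doubleS addn2.
have hh1 : forall y, (fun y => y.*2.+1) y.+1 = (fun y => y.*2.+1) y + 2.
  by move=> y /=; rewrite doubleS addn2.
move: hq; rewrite /content /charge_of /ncol /nrow /ncomp /=.
set q := (_ %/ _)%Z => hq.
rewrite /W0 /Kc.
case: hjj => hjj; subst jj; rewrite /add_node /= in hnu; rewrite hnu in hbar'; move: hbar'; rewrite /= in hq.
- case ht: (odd t) => /= hQ; rewrite hQ /= in hperm hs0 hs1.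
  +
    have hk : k < n1 t N by move: hs1; rewrite size_incr_nth; case: ifP => ?; lia.
    exists ((nth 0 mu.1 k + n1 t N - k.+1).*2.+1), (2 * q + 1)%R; split.
      move=> r; have := permP hperm (fun y => y %% e == r); rewrite !count_cat.
      have := slot_count hh1 mu.1 (fun y => y %% e == r) hk; rewrite /= => E.
            move: hst; lia.
    move: hst hq he hk; rewrite ht /=; lia.
  + have hk : k < n0 t N by move: hs0; rewrite size_incr_nth; case: ifP => ?; lia.
    exists ((nth 0 mu.1 k + n0 t N - k.+1).*2), (2 * q + 1)%R; split.
      move=> r; have := permP hperm (fun y => y %% e == r); rewrite !count_cat.
      have := slot_count hh0 mu.1 (fun y => y %% e == r) hk; rewrite /= => E.
      by move=> ->; rewrite addnAC E addnAC.
    move: hst hq he hk; rewrite ht /=; lia.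
- case ht: (odd t) => /= hQ; rewrite hQ /= in hperm hs0 hs1.
  + have hk : k < n0 t N by move: hs0; rewrite size_incr_nth; case: ifP => ?; lia.
    exists ((nth 0 mu.2 k + n0 t N - k.+1).*2), (2 * q)%R; split.
      move=> r; have := permP hperm (fun y => y %% e == r); rewrite !count_cat.
      have := slot_count hh0 mu.2 (fun y => y %% e == r) hk; rewrite /= => E.
      by move=> ->; rewrite addnAC E addnAC.
    move: hst hq he hk; rewrite ht /=; lia.
  + have hk : k < n1 t N by move: hs1; rewrite size_incr_nth; case: ifP => ?; lia.
    exists ((nth 0 mu.2 k + n1 t N - k.+1).*2.+1), (2 * q)%R; split.
      move=> r; have := permP hperm (fun y => y %% e == r); rewrite !count_cat.
      have := slot_count hh1 mu.2 (fun y => y %% e == r) hk; rewrite /= => E.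
      by move=> ->; rewrite -addnA E addnA.
    move: hst hq he hk; rewrite ht /=; lia.
Qed.

Theorem proposition7p9 (e t : nat) (he1 : 1 < e) (he_odd : odd e)
  (mu : bipartition) (hmu : is_bipartition mu)
  (j1 j2 : nat) (hj1 : j1 < e) (hj2 : j2 < e) (hj12 : j1 != j2)
  (nu1 nu2 : bipartition)
  (hf1 : f_tilde e ((t%:Z - ((e - 1) %/ 2)%:Z)%R, 0%R) j1 mu = Some nu1)
  (hf2 : f_tilde e ((t%:Z - ((e - 1) %/ 2)%:Z)%R, 0%R) j2 mu = Some nu2)
  (la1 la2 : seq nat) (hla1 : is_Phi t nu1 la1) (hla2 : is_Phi t nu2 la2) :
  core e la1 <> core e la2.
Proof.
move=> heq.
set N := (size la1 + size la2 + t).*2.+1.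
have hN : odd N by rewrite /N /= odd_double.
have hr1 : (if odd (size la1) then size la1 else (size la1).+1) <= N.
  by rewrite /N; case: ifP => _; rewrite -addnn; lia.
have hr2 : (if odd (size la2) then size la2 else (size la2).+1) <= N.
  by rewrite /N; case: ifP => _; rewrite -addnn; lia.
have ht : t <= N by rewrite /N -addnn; lia.
have [x1 [m1 [hc1 hx1]]] := key he1 he_odd hf1 hla1 hN hr1 ht.
have [x2 [m2 [hc2 hx2]]] := key he1 he_odd hf2 hla2 hN hr2 ht.
have he0 : 0 < e by apply: ltnW.
have hs1 : size la1 <= N by rewrite /N -addnn; lia.
have hs2 : size la2 <= N by rewrite /N -addnn; lia.
have hP : perm_eq (Me e (beta_set la1 N)) (Me e (beta_set la2 N)).
  apply: (perm_trans (core_Me he0 hs1)); rewrite heq perm_sym.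
  exact: core_Me he0 hs2.
have hC : forall r, count (fun y => y %% e == r) (beta_set la1 N)
                  = count (fun y => y %% e == r) (beta_set la2 N).
  by move=> r; have := permP hP (pred1 r); rewrite /Me !count_map.
have h2 : ((x2 + 2) %% e == x2 %% e) = false.
  rewrite -{2}[x2](addn0 x2) eqn_modDl modn_small ?mod0n //.
  have : e != 2 by apply: contraTneq he_odd => ->.
  lia.
have hm : x1 %% e = x2 %% e.
  have := hc1 (x2 %% e); have := hc2 (x2 %% e); rewrite hC h2 eqxx.
  case: eqP => //; lia.
have := divn_eq x1 e; have := divn_eq x2 e.
rewrite hm; set d1 := x1 %/ e; set d2 := x2 %/ e; set rr := x2 %% e => E2 E1.
have hh := hdiv he_odd.
set h := (e - 1) %/ 2 in hh.
have hk : (2 * (j1%:Z - j2%:Z) = e%:Z * (d1%:Z - d2%:Z - m1 + m2))%R.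
  move: hx1 hx2; rewrite E1 E2; lia.
move/negP: hj12; apply; apply/eqP.
set M := (d1%:Z - d2%:Z - m1 + m2)%R in hk.
have : (M <= -2 \/ M = -1 \/ M = 0 \/ M = 1 \/ 2 <= M)%R by lia.
case=> [hM|[hM|[hM|[hM|hM]]]].
- have : (e%:Z * M <= e%:Z * (-2))%R by rewrite ler_pM2l //; lia.
  lia.
- rewrite hM in hk; lia.
- rewrite hM mulr0 in hk; lia.
- rewrite hM mulr1 in hk; lia.
- have : (e%:Z * 2 <= e%:Z * M)%R by rewrite ler_pM2l //; lia.
  lia.
Qed.
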